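(* In $A_n$ we have, for all $a\in\mathbb{N}_0$, \[ T_i\omega_k^a=\omega_k^aT_i \quad (i\neq k),\qquad T_i(\omega_i^a-x_{i+1}\omega_{i+1}^a)=(\omega_i^a-x_{i+1}\omega_{i+1}^a)T_i, \] for all $1\le i\le n-1$ and $1\le k\le n$.
   Context: $R=\mathbb{Z}[x_1,\dots,x_n]\otimes\bigwedge^\bullet(\omega_1,\dots,\omega_n)$ (supercommutative, $x_i$ even, $\omega_i$ odd); $S_n$ acts by $s_i(x_j)=x_{s_i(j)}$, $s_i(\omega_j)=\omega_j+\delta_{ij}(x_i-x_{i+1})\omega_{i+1}$; $T_i$ denotes the Demazure operator $f\mapsto(f-s_i(f))/(x_i-x_{i+1})$. $A_n$ is the superalgebra of operators on $R$ generated by the $T_i$ and multiplication by elements of $R$. Labeled elements: $\omega_k^0=\omega_k$, $\omega_0^a=0$, $\omega_k^a=\omega_{k-1}^{a-1}-x_k\omega_k^{a-1}$ for $a\ge1$. *)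

(* Defs.v *)
From HB Require Import structures.
From mathcomp Require Import all_boot all_algebra all_fingroup.
From mathcomp Require Import mpoly.
From Stdlib Require Import ClassicalEpsilon.
Set Implicit Arguments. Unset Strict Implicit. Unset Printing Implicit Defensive.
Import GRing.Theory.
Local Open Scope ring_scope.

(* The superalgebra R = Z[x_1..x_n] (x) /\(omega_1..omega_n), with 0-based
   indices 'I_n.  An element is a finite function S |-> coefficient of the
   exterior basis monomial omega_S := omega_{s_1} ... omega_{s_k}
   (s_1 < ... < s_k the elements of S in increasing order).
   NB: the product of R is [Rmul] below (NOT the pointwise product of ffuns). *)

Section SuperAlg.
Variable n : nat.

Definition Pol := {mpoly int[n]}.
Definition R := {ffun {set 'I_n} -> Pol}.

(* sign of omega_S * omega_T = sgnST * omega_(S u T) for disjoint S, T :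
   (-1)^(number of pairs (s,t), s in S, t in T, t < s) *)
Definition sgnST (S T : {set 'I_n}) : Pol :=
  (-1) ^+ #|[set p : 'I_n * 'I_n | [&& p.1 \in S, p.2 \in T & (p.2 < p.1)%N]]|.

(* supercommutative product of R (x's even, omegas odd) *)
Definition Rmul (f g : R) : R :=
  [ffun U => \sum_(S : {set 'I_n}) \sum_(T : {set 'I_n})
     (if [disjoint S & T] && (S :|: T == U) then sgnST S T * (f S * g T) else 0)].

Definition polR (p : Pol) : R := [ffun U => if U == set0 then p else 0].
Definition Rone : R := polR 1.
Definition xR (j : 'I_n) : R := polR 'X_j.
Definition om (j : 'I_n) : R := [ffun U => if U == [set j] then 1 else 0].

(* the simple transposition s_i, i = a, i+1 = b, as an algebra automorphism:
   s_i(x_j) = x_{s_i(j)},  s_i(omega_j) = omega_j + delta_{ij}(x_i - x_{i+1}) omega_{i+1} *)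
Definition s_om (a b j : 'I_n) : R :=
  if j == a then om a + Rmul (xR a - xR b) (om b) else om j.

Definition s_basis (a b : 'I_n) (S : {set 'I_n}) : R :=
  foldr (fun j acc => Rmul (s_om a b j) acc) Rone (enum S).

Definition sR (a b : 'I_n) (f : R) : R :=
  \sum_(S : {set 'I_n}) Rmul (polR (msym (tperm a b) (f S))) (s_basis a b S).

(* Demazure operator T_i f = (f - s_i f) / (x_i - x_{i+1}); the quotient is
   unique since x_i - x_{i+1} is a non-zero-divisor of R. *)
Definition Tdem (a b : 'I_n) (f : R) : R :=
  epsilon (inhabits (0 : R)) (fun g : R => Rmul (xR a - xR b) g = f - sR a b f).

(* labeled elements omega_k^a (0-based k; omega_{-1}^a = 0) *)
Fixpoint omL (a : nat) (k : 'I_n) : R :=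
  match a with
  | 0 => om k
  | a'.+1 => (match val k with 0 => 0 | k'.+1 => omL a' (insubd k k') end)
             - Rmul (xR k) (omL a' k)
  end.

End SuperAlg.

(* Main.v *)
Require Import Defs.
From mathcomp Require Import all_boot all_algebra all_fingroup.
From mathcomp Require Import mpoly.
From mathcomp Require Import zify ring.
From Stdlib Require Import ClassicalEpsilon.
Set Implicit Arguments. Unset Strict Implicit. Unset Printing Implicit Defensive.
Import GRing.Theory.
Local Open Scope ring_scope.

Section Basic.
Variable n : nat.
Local Notation Pol := (Pol n).
Local Notation R := (R n).

Definition Rscale (p : Pol) (f : R) : R := [ffun U => p * f U].
Definition cnt (l : 'I_n) (T : {set 'I_n}) := #|[set t in T | (t < l)%N]|.
Definition eps (l : 'I_n) T : Pol := (-1) ^+ cnt l T.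
Definition eb (S : {set 'I_n}) : R := [ffun U => (U == S)%:R].

Lemma sgnST1 (l : 'I_n) (T : {set 'I_n}) : sgnST [set l] T = eps l T.
Proof.
rewrite /sgnST /eps /cnt; congr (_ ^+ _).
rewrite (_ : [set p | _] = setX [set l] [set t in T | (t < l)%N]).
  by rewrite cardsX cards1 mul1n.
apply/setP=> [[a b]]; rewrite !inE /=.
by case: (a =P l) => [->|] //=.
Qed.

Lemma sgnST0 (T : {set 'I_n}) : sgnST set0 T = 1.
Proof.
rewrite /sgnST (_ : [set p | _] = set0) ?cards0 ?expr0 //.
by apply/setP=> [[a b]]; rewrite !inE.
Qed.

Lemma RmulBl (f g h : R) : Rmul (f - g) h = Rmul f h - Rmul g h.
Proof.
apply/ffunP=> U; rewrite !ffunE -sumrB; apply: eq_bigr=> S _.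
rewrite -sumrB; apply: eq_bigr=> T _; rewrite !ffunE.
by case: ifP=> _; rewrite ?subr0 // mulrBl mulrBr.
Qed.

Lemma RmulBr (f g h : R) : Rmul f (g - h) = Rmul f g - Rmul f h.
Proof.
apply/ffunP=> U; rewrite !ffunE -sumrB; apply: eq_bigr=> S _.
rewrite -sumrB; apply: eq_bigr=> T _; rewrite !ffunE.
by case: ifP=> _; rewrite ?subr0 // mulrBr mulrBr.
Qed.

Lemma RmulDl (f g h : R) : Rmul (f + g) h = Rmul f h + Rmul g h.
Proof.
apply/ffunP=> U; rewrite !ffunE -big_split; apply: eq_bigr=> S _.
rewrite -big_split; apply: eq_bigr=> T _; rewrite !ffunE.
by case: ifP=> _; rewrite /= ?addr0 // mulrDl mulrDr.
Qed.

Lemma RmulDr (f g h : R) : Rmul f (g + h) = Rmul f g + Rmul f h.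
Proof.
apply/ffunP=> U; rewrite !ffunE -big_split; apply: eq_bigr=> S _.
rewrite -big_split; apply: eq_bigr=> T _; rewrite !ffunE.
by case: ifP=> _; rewrite /= ?addr0 // mulrDr mulrDr.
Qed.

Lemma Rmul0l (f : R) : Rmul 0 f = 0.
Proof. by have := RmulBl 0 0 f; rewrite !subrr. Qed.

Lemma Rmul0r (f : R) : Rmul f 0 = 0.
Proof. by have := RmulBr f 0 0; rewrite !subrr. Qed.

Lemma RmulZl (p : Pol) (f g : R) : Rmul (Rscale p f) g = Rscale p (Rmul f g).
Proof.
apply/ffunP=> U; rewrite !ffunE mulr_sumr; apply: eq_bigr=> S _.
rewrite mulr_sumr; apply: eq_bigr=> T _; rewrite !ffunE.
by case: ifP=> _; [ring | rewrite mulr0].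
Qed.

Lemma RmulZr (p : Pol) (f g : R) : Rmul f (Rscale p g) = Rscale p (Rmul f g).
Proof.
apply/ffunP=> U; rewrite !ffunE mulr_sumr; apply: eq_bigr=> S _.
rewrite mulr_sumr; apply: eq_bigr=> T _; rewrite !ffunE.
by case: ifP=> _; [ring | rewrite mulr0].
Qed.

Lemma Rmul_polR (p : Pol) (f : R) : Rmul (polR p) f = Rscale p f.
Proof.
apply/ffunP=> U; rewrite !ffunE (bigD1 set0) //= [X in _ + X]big1 ?addr0; last first.
  move=> S SN; apply: big1=> T _; rewrite ffunE (negbTE SN).
  by case: ifP=> _; rewrite ?mul0r ?mulr0.
rewrite (bigD1 U) //= [X in _ + X]big1 ?addr0; last first.
  move=> T TU; rewrite set0U (negbTE TU) andbF //.
by rewrite set0U eqxx andbT disjoints_subset sub0set sgnST0 ffunE eqxx mul1r.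
Qed.

Lemma RomE (l : 'I_n) (f : R) U : Rmul (om l) f U =
  if l \in U then eps l (U :\ l) * f (U :\ l) else 0.
Proof.
rewrite !ffunE (bigD1 [set l]) //= [X in _ + X]big1 ?addr0; last first.
  move=> S SN; apply: big1=> T _; rewrite ffunE (negbTE SN).
  by case: ifP=> _; rewrite ?mul0r ?mulr0.
have E (T : {set 'I_n}) : [disjoint [set l] & T] && ([set l] :|: T == U) =
           (l \in U) && (T == U :\ l).
  rewrite disjoints1; apply/idP/idP.
    by case/andP=> lT /eqP <-; rewrite setU11 /= setU1K.
  by case/andP=> lU /eqP ->; rewrite setD11 /= setD1K.
under eq_bigr do rewrite E.
case: (l \in U) => /=; last by rewrite big1.
rewrite -big_mkcond big_pred1_eq sgnST1 ffunE eqxx mul1r //.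
Qed.


Lemma Rscale0 (p : Pol) : Rscale p 0 = 0.
Proof. by apply/ffunP=> U; rewrite !ffunE mulr0. Qed.

Lemma Rscale1 (f : R) : Rscale 1 f = f.
Proof. by apply/ffunP=> U; rewrite !ffunE mul1r. Qed.

Lemma om_eb (l : 'I_n) : om l = eb [set l].
Proof. by apply/ffunP=> U; rewrite !ffunE; case: eqP. Qed.

Lemma Rone_eb : Rone n = eb set0.
Proof. by apply/ffunP=> U; rewrite !ffunE; case: eqP. Qed.

Lemma eps_min (l : 'I_n) (T : {set 'I_n}) :
  (forall t, t \in T -> (l < t)%N) -> eps l T = 1.
Proof.
move=> H; rewrite /eps /cnt (_ : [set t in T | _] = set0) ?cards0 ?expr0 //.
apply/setP=> t; rewrite !inE; case tT: (t \in T) => //=.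
by have := H t tT; rewrite ltnNge => /negbTE; apply: contraFF => /ltnW.
Qed.

Lemma RomEb (l : 'I_n) (T : {set 'I_n}) :
  Rmul (om l) (eb T) = if l \in T then 0 else Rscale (eps l T) (eb (l |: T)).
Proof.
apply/ffunP=> U; rewrite RomE !ffunE.
case lT: (l \in T); rewrite ?ffunE.
  case: ifP=> // lU; case: eqP; rewrite ?mulr0 // => E.
  by move: lT; rewrite -E setD11.
case: (U =P l |: T) => [->|NU]; first by rewrite setU11 setU1K ?lT ?eqxx.
case: ifP => lU; rewrite ?mulr0 //; case: eqP; rewrite ?mulr0 // => E.
by case: NU; rewrite -E setD1K.
Qed.


Section Trans.
Variables (i j : 'I_n).
Hypothesis hij : val j = (val i).+1.
Local Notation d := ('X_i - 'X_j : Pol).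
Local Notation sig := (msym (tperm i j)).

Lemma hijN : nat_of_ord j = (nat_of_ord i).+1.
Proof. exact: hij. Qed.

Lemma neqN (a b : 'I_n) : (a != b) = (nat_of_ord a != nat_of_ord b).
Proof. by []. Qed.

Lemma ij_neq : (j == i) = false.
Proof. by apply/negbTE; rewrite -val_eqE hij /=; elim: (val i) => //. Qed.

Lemma ji_neq : (i == j) = false.
Proof. by rewrite eq_sym ij_neq. Qed.

Lemma xRd : xR i - xR j = polR d.
Proof.
by apply/ffunP=> U; rewrite !ffunE; case: ifP; rewrite ?subr0.
Qed.

Lemma Rmul_d (f : R) : Rmul (xR i - xR j) f = Rscale d f.
Proof. by rewrite xRd Rmul_polR. Qed.

Lemma s_omE (l : 'I_n) :
  s_om i j l = if l == i then om i + Rscale d (om j) else om l.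
Proof. by rewrite /s_om Rmul_d. Qed.

Lemma set_cons' (l : 'I_n) s : [set x in l :: s] = l |: [set x in s].
Proof. by apply/setP=> x; rewrite !inE. Qed.

Lemma foldr_sb s : sorted (fun a b : 'I_n => (a < b)%N) s ->
  foldr (fun j0 acc => Rmul (s_om i j j0) acc) (Rone n) s =
  eb [set x in s] + (if (i \in s) && (j \notin s)
     then Rscale d (eb ([set x in s] :\ i :|: [set j])) else 0).
Proof.
elim: s => [|l s IH] /=.
  rewrite Rone_eb addr0 (_ : [set x in [::]] = set0) //; by apply/setP=> x; rewrite !inE.
move=> Hs.
have Hs' : sorted (fun a b : 'I_n => (a < b)%N) s := path_sorted Hs.
have H : forall t, t \in s -> (l < t)%N.
  move=> t ts; have := order_path_min _ Hs.
  move=> /(_ _) /allP; apply=> //; move=> ? ? ?; exact: ltn_trans.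
rewrite IH // set_cons' s_omE.
have ls : l \notin s by apply/negP=> /H; rewrite ltnn.
case: (l =P i) => [li | lni].
  subst l; have -> : (i \in s) = false by apply/negbTE.
  rewrite /= addr0 RmulDl RmulZl !RomEb inE (negbTE ls) eps_min; last first.
    by move=> t; rewrite inE; apply: H.
  rewrite Rscale1 !in_cons eqxx ij_neq /= !inE.
  case js: (j \in s) => /=; first by rewrite Rscale0 addr0.
  rewrite setU1K ?inE // [_ :|: [set j]]setUC eps_min ?Rscale1 //.
  move=> t; rewrite inE => ts; have := H t ts; rewrite hij.
  have : t != j by apply: contraNneq (negbT js) => <-.
  rewrite -val_eqE hij /= => /negbTE b a; by rewrite ltn_neqAle eq_sym b a.
have nil : (i == l) = false by apply/eqP=> E; apply: lni; rewrite E.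
rewrite RmulDr RomEb inE (negbTE ls) eps_min ?Rscale1; last first.
  by move=> t; rewrite inE; apply: H.
rewrite !in_cons nil /=.
case iS: (i \in s) => /=; last by rewrite Rmul0r.
have li := H i iS.
have lj : (j == l) = false.
  by apply/negbTE; rewrite -val_eqE hij /=; apply/eqP => E; move: li; rewrite -E ltnNge leqnSn.
rewrite lj /=; case js: (j \in s) => /=; first by rewrite Rmul0r.
rewrite RmulZr RomEb !inE (negbTE ls) andbF (eq_sym l j) lj /=.
rewrite eps_min ?Rscale1; last first.
  move=> t; rewrite !inE; case/orP => [/andP [_ ts] | /eqP ->]; first exact: H.
  by rewrite hij ltnS ltnW.
congr (_ + Rscale _ (eb _)); apply/setP=> x; rewrite !inE.
by case: (x =P l) => [->|] //=; rewrite eq_sym nil eq_sym lj.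
Qed.


Lemma sorted_enum_set (S : {set 'I_n}) : sorted (fun a b : 'I_n => (a < b)%N) (enum S).
Proof.
rewrite /enum_mem; apply: sorted_filter; first by move=> ? ? ?; apply: ltn_trans.
rewrite -enumT; have := iota_ltn_sorted 0 n; rewrite -val_enum_ord sorted_map.
by [].
Qed.

Lemma s_basisE (S : {set 'I_n}) : s_basis i j S = eb S +
  (if (i \in S) && (j \notin S) then Rscale d (eb (S :\ i :|: [set j])) else 0).
Proof. by rewrite /s_basis foldr_sb ?sorted_enum_set // set_enum !mem_enum. Qed.

Lemma cond_eq (S U : {set 'I_n}) :
  (i \in S) && (j \notin S) && (U == S :\ i :|: [set j]) =
  (j \in U) && (i \notin U) && (S == U :\ j :|: [set i]).
Proof.
apply/idP/idP.
  case/andP => [/andP [iS jS] /eqP ->]; rewrite !inE ?eqxx ?ij_neq ?ji_neq ?orbT ?andbT /=.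
  apply/eqP/setP=> x; rewrite !inE.
  case: (eqVneq x i) => [->|xi]; last case: (eqVneq x j) => [->|xj]; rewrite ?eqxx ?ij_neq ?ji_neq ?iS ?(negbTE jS) /= ?andbF ?orbF ?andbT ?orbT //.
case/andP => [/andP [jU iU] /eqP ->]; rewrite !inE ?eqxx ?ij_neq ?ji_neq ?orbT ?andbT /=.
apply/eqP/setP=> x; rewrite !inE.
case: (eqVneq x i) => [->|xi]; last case: (eqVneq x j) => [->|xj]; rewrite ?eqxx ?ij_neq ?ji_neq ?jU ?(negbTE iU) /= ?andbF ?orbF ?andbT ?orbT //.
Qed.


Lemma sRE (f : R) U : sR i j f U = sig (f U) +
  (if (j \in U) && (i \notin U) then d * sig (f (U :\ j :|: [set i])) else 0).
Proof.
rewrite /sR sum_ffunE.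
transitivity (\sum_S (sig (f S) * (U == S)%:R +
  (if (i \in S) && (j \notin S) && (U == S :\ i :|: [set j])
   then d * sig (f S) else 0))).
  apply: eq_bigr => S _; rewrite Rmul_polR s_basisE !ffunE mulrDr; congr (_ + _).
  case: ifP => _ /=; rewrite ?ffunE ?mulr0 //.
  by case: eqP => _; rewrite ?mulr0 ?mulr1 // mulrC.
rewrite big_split /=; congr (_ + _).
  rewrite (bigD1 U) //= eqxx mulr1 [X in _ + X]big1 ?addr0 // => S SU.
  by rewrite eq_sym (negbTE SU) mulr0.
under eq_bigr do rewrite cond_eq.
case: ((j \in U) && (i \notin U)) => /=; last by rewrite big1.
by rewrite -big_mkcond big_pred1_eq.
Qed.


Lemma S2 (U : {set 'I_n}) : i \notin U -> eps i (U :\ j) = eps j (U :\ j).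
Proof.
move=> iU; rewrite /eps /cnt (_ : [set t in U :\ j | (t < i)%N] = [set t in U :\ j | (t < j)%N]) //.
apply/setP=> t; rewrite !inE.
case: (eqVneq t i) => [->|ti]; first by rewrite (negbTE iU) andbF.
case: (t \in U) (t != j) => //= [] [] //=.
move: ti; rewrite -val_eqE hij => /negbTE ti.
by rewrite [RHS]ltnS [RHS]leq_eqVlt ti.
Qed.

Lemma S1 (U : {set 'I_n}) : i \in U -> j \in U ->
  eps j (U :\ j) = - eps i (U :\ i).
Proof.
move=> iU jU; rewrite /eps /cnt.
rewrite (_ : [set t in U :\ j | (t < j)%N] = i |: [set t in U :\ i | (t < i)%N]).
  by rewrite cardsU1 !inE eqxx /= exprD expr1 mulN1r.
apply/setP=> t; rewrite !inE.
case: (eqVneq t i) => [->|ti] /=; first by rewrite ji_neq iU hij ltnSn.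
case: (eqVneq t j) => [->|tj] /=.
  by rewrite hij ltnNge leqnSn andbF.
case: (t \in U) => //=.
move: ti; rewrite -val_eqE hij => /negbTE ti.
by rewrite [LHS]ltnS [LHS]leq_eqVlt ti.
Qed.

Lemma S3 (U : {set 'I_n}) (l : 'I_n) : l != i -> l != j -> i \notin U -> j \in U ->
  eps l ((U :\ j :|: [set i]) :\ l) = eps l (U :\ l).
Proof.
move=> li lj iU jU; rewrite /eps /cnt.
have E : [set t in (U :\ j :|: [set i]) :\ l | (t < l)%N] =
   tperm i j @^-1: [set t in U :\ l | (t < l)%N].
  apply/setP=> t; rewrite !inE.
case: tpermP => [->|->|ti tj].
  - rewrite eqxx orbT andbT (eq_sym i l) (negbTE li) (eq_sym j l) (negbTE lj) /=.
    rewrite jU /=; move: lj; rewrite neqN hijN => lj.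
    by apply/idP/idP; lia.
  - by rewrite eqxx ij_neq (negbTE iU) /= !andbF.
  - by rewrite (introF eqP ti) (introF eqP tj) /= orbF.
by rewrite E card_preimset //; exact: perm_inj.
Qed.


Lemma sR_ffun (f : R) : sR i j f = [ffun U => sig (f U) +
  (if (j \in U) && (i \notin U) then d * sig (f (U :\ j :|: [set i])) else 0)].
Proof. by apply/ffunP=> U; rewrite sRE ffunE. Qed.

Lemma sRB (f g : R) : sR i j (f - g) = sR i j f - sR i j g.
Proof.
rewrite !sR_ffun; apply/ffunP=> U; rewrite !ffunE !msymB.
by case: ifP => _; rewrite ?subr0 //; ring.
Qed.

Lemma sRZ (p : Pol) (f : R) : sR i j (Rscale p f) = Rscale (sig p) (sR i j f).
Proof.
rewrite !sR_ffun; apply/ffunP=> U; rewrite !ffunE !msymM.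
by case: ifP => _; rewrite ?mulr0 ?addr0 //; ring.
Qed.

Lemma Rscale0l (f : R) : Rscale 0 f = 0.
Proof. by apply/ffunP=> U; rewrite !ffunE mul0r. Qed.

Lemma sR_om (l : 'I_n) :
  sR i j (om l) = if l == i then om i + Rscale d (om j) else om l.
Proof.
rewrite /sR (bigD1 [set l]) //= [X in _ + X]big1 ?addr0; last first.
  move=> S SN; rewrite ffunE (negbTE SN) msym0.
  rewrite (_ : polR 0 = 0) ?Rmul0l //.
  by apply/ffunP=> U; rewrite !ffunE; case: ifP.
rewrite ffunE eqxx msym1 Rmul_polR Rscale1 s_basisE !inE -om_eb.
case: (eqVneq l i) => [->|li] /=; last first.
  by rewrite addr0.
by rewrite eq_sym ji_neq /= setDv set0U -om_eb.
Qed.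

Lemma sig_eps (l : 'I_n) T : sig (eps l T) = eps l T.
Proof. exact: rmorph_sign. Qed.

Lemma RomF (l : 'I_n) (f : R) : Rmul (om l) f =
  [ffun U : {set 'I_n} => if l \in U then eps l (U :\ l) * f (U :\ l) else 0].
Proof. by apply/ffunP=> U; rewrite RomE ffunE. Qed.

Lemma K (l : 'I_n) (f : R) : sR i j (Rmul (om l) f) =
  Rmul (om l) (sR i j f) +
  (if l == i then Rscale d (Rmul (om j) (sR i j f)) else 0).
Proof.
case: (eqVneq l i) => [->|li].
  rewrite !sR_ffun !RomF; apply/ffunP=> U; rewrite !ffunE !inE.
  rewrite !eqxx ij_neq ji_neq /= ?orbT /=.
  case iU: (i \in U); case jU: (j \in U) => /=.
  - rewrite msymM sig_eps (S1 iU jU) (_ : U :\ i :\ j :|: [set i] = U :\ j).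
      by rewrite !addr0; ring.
    apply/setP=> x; rewrite !inE; case: (eqVneq x i) => [->|xi] /=;
      by rewrite ?iU ?ji_neq ?orbF.
  - by rewrite msymM sig_eps !mulr0 !addr0.
  - rewrite msymM sig_eps (_ : (U :\ j :|: [set i]) :\ i = U :\ j).
      by rewrite (S2 (negbT iU)) msym0 !addr0 !add0r.
    apply/setP=> x; rewrite !inE; case: (eqVneq x i) => [->|xi] /=;
      by rewrite ?iU ?andbF ?orbF.
  - by rewrite msym0 !mulr0 !addr0.
rewrite addr0 !sR_ffun !RomF; apply/ffunP=> U; rewrite !ffunE !inE.
rewrite (negbTE li) (eq_sym i l) (negbTE li) /= ?orbF.
case lU: (l \in U) => /=; last first.
  by rewrite msym0 add0r andbF msym0 mulr0; case: ifP.
case: (eqVneq l j) => [->|lj] /=.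
  rewrite msymM sig_eps msym0 mulr0 !addr0.
  by case: ifP; rewrite ?addr0.
rewrite msymM sig_eps.
case jU: (j \in U); case iU: (i \in U) => /=; rewrite ?addr0 //.
rewrite msymM sig_eps S3 //; last by rewrite iU.
rewrite (_ : (U :\ j :|: [set i]) :\ l = U :\ l :\ j :|: [set i]); first by ring.
apply/setP=> x; rewrite !inE; case: (eqVneq x l) => [->|xl] /=;
  by rewrite ?(negbTE li) ?andbF ?orbF.
Qed.

Definition Mult (w : R) := forall f, sR i j (Rmul w f) = Rmul (sR i j w) (sR i j f).

Lemma sR0 : sR i j 0 = 0.
Proof. by have := sRB 0 0; rewrite !subrr. Qed.

Lemma Mult_om (l : 'I_n) : Mult (om l).
Proof.
move=> f; rewrite K sR_om; case: (eqVneq l i) => [->|li].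
  by rewrite RmulDl RmulZl.
by rewrite addr0.
Qed.

Lemma Mult_B (a b : R) : Mult a -> Mult b -> Mult (a - b).
Proof. by move=> Ha Hb f; rewrite RmulBl sRB Ha Hb sRB RmulBl. Qed.

Lemma Mult_0 : Mult 0.
Proof. by move=> f; rewrite Rmul0l sR0 Rmul0l. Qed.

Lemma Mult_x (k : 'I_n) (w : R) : Mult w -> Mult (Rmul (xR k) w).
Proof.
move=> Hw f; rewrite /xR !Rmul_polR RmulZl !sRZ Hw.
by rewrite RmulZl.
Qed.

Lemma Mult_omL a (k : 'I_n) : Mult (omL a k).
Proof.
elim: a k => [|a IH] k /=; first exact: Mult_om.
apply: Mult_B; last exact/Mult_x/IH.
case: (val k) => [|k']; [exact: Mult_0 | exact: IH].
Qed.

Lemma msymX1 (s : 'S_n) (k : 'I_n) : msym s ('X_k : Pol) = 'X_(s k).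
Proof. by rewrite /msym mmapX mmap1U. Qed.

Lemma RscaleB (p q : Pol) (f : R) : Rscale (p - q) f = Rscale p f - Rscale q f.
Proof. by apply/ffunP=> U; rewrite !ffunE mulrBl. Qed.

Lemma RscaleD (p : Pol) (f g : R) : Rscale p (f + g) = Rscale p f + Rscale p g.
Proof. by apply/ffunP=> U; rewrite !ffunE mulrDr. Qed.

Lemma RscaleA (p q : Pol) (f : R) : Rscale p (Rscale q f) = Rscale (p * q) f.
Proof. by apply/ffunP=> U; rewrite !ffunE mulrA. Qed.

Definition predL a (k : 'I_n) : R :=
  match val k with 0 => 0 | k'.+1 => omL a (insubd k k') end.

Lemma omLS a (k : 'I_n) : omL a.+1 k = predL a k - Rscale 'X_k (omL a k).
Proof. by rewrite /= /xR Rmul_polR. Qed.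

Lemma predL_inv a (k : 'I_n) :
  (forall k', k' != i -> sR i j (omL a k') = omL a k') -> k != j ->
  sR i j (predL a k) = predL a k.
Proof.
move=> IH kj; rewrite /predL.
case E: (val k) => [|k']; first exact: sR0.
apply: IH; apply/negP=> /eqP E2.
have : val (insubd k k') = val i by rewrite E2.
rewrite val_insubd (_ : (k' < n)%N); last by have := valP k; rewrite E => /ltnW.
move=> E3; move: kj; rewrite -val_eqE E hij E3 eqxx //.
Qed.

Lemma predL_j a : predL a j = omL a i.
Proof.
rewrite /predL hij /=.
have -> // : insubd j (val i) = i.
by apply: val_inj; rewrite val_insubd (ltn_ord i).
Qed.

Lemma inv_omL a : (forall k, k != i -> sR i j (omL a k) = omL a k) /\
  sR i j (omL a i) = omL a i + Rscale d (omL a j).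
Proof.
elim: a => [|a [IH1 IH2]].
  split; first by move=> k ki; rewrite /= sR_om (negbTE ki).
  by rewrite /= sR_om eqxx.
have Pj : sR i j (omL a.+1 j) = omL a.+1 j.
  rewrite omLS sRB sRZ msymX1 tpermR predL_j IH2 (IH1 j); last by rewrite ij_neq.
  by apply/ffunP=> U; rewrite !ffunE; ring.
split.
  move=> k ki; case: (eqVneq k j) => [->|kj]; first exact: Pj.
  rewrite omLS sRB sRZ msymX1 tpermD 1?eq_sym // (predL_inv IH1 kj) IH1 //.
rewrite omLS sRB sRZ msymX1 tpermL (predL_inv IH1) ?ji_neq // IH2.
rewrite omLS predL_j.
by apply/ffunP=> U; rewrite !ffunE; ring.
Qed.

Lemma divP (p : Pol) : exists q, p - sig p = d * q.
Proof.
pose Dv (p : Pol) := exists q, p - sig p = d * q.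
have DvM p1 q1 : Dv p1 -> Dv q1 -> Dv (p1 * q1).
  move=> [a Ea] [b Eb]; exists (a * q1 + sig p1 * b).
  have Hp : sig p1 = p1 - d * a by rewrite -Ea opprB addrC subrK.
  have Hq : sig q1 = q1 - d * b by rewrite -Eb opprB addrC subrK.
  by rewrite msymM Hp Hq; ring.
have Dv1 : Dv 1 by exists 0; rewrite msym1 subrr mulr0.
have DvX k : Dv 'X_k.
  rewrite /Dv msymX1; case: tpermP => [->|->|ki kj].
  - by exists 1; rewrite mulr1.
  - by exists (-1); rewrite mulrN1 opprB.
  - by exists 0; rewrite subrr mulr0.
have DvXm m : Dv 'X_[m].
  rewrite mpolyXE_id; apply: big_ind => //.
  move=> k _; elim: (m k) => [|e IHe]; first by rewrite expr0.
  by rewrite exprS; apply: DvM.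
elim/mpolyind: p => [|c m p _ _ [q Eq]]; first by exists 0; rewrite msym0 subrr mulr0.
have [a Ea] := DvXm m.
exists (c *: a + q).
by rewrite msymD msymZ mulrDr -scalerAr -Ea -Eq scalerBr; ring.
Qed.

Lemma divPb (p : Pol) : exists q, p - sig p == d * q.
Proof. by have [q Eq] := divP p; exists q; rewrite Eq. Qed.

Lemma existsT (f : R) : exists g, Rmul (xR i - xR j) g = f - sR i j f.
Proof.
exists [ffun U => xchoose (divPb (f U)) -
   (if (j \in U) && (i \notin U) then sig (f (U :\ j :|: [set i])) else 0)].
rewrite Rmul_d sR_ffun; apply/ffunP=> U; rewrite !ffunE mulrBr.
rewrite -(eqP (xchooseP (divPb (f U)))).
by case: ifP => _; rewrite ?mulr0; ring.
Qed.

Lemma d_neq0 : d != 0.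
Proof.
apply/eqP=> H; have := congr1 (mcoeff U_(i)) H.
by rewrite mcoeffB !mcoeffXU eqxx ij_neq mcoeff0 subr0.
Qed.

Lemma cancelT (g1 g2 : R) : Rscale d g1 = Rscale d g2 -> g1 = g2.
Proof.
move=> E; apply/ffunP=> U; have := congr1 (fun h : R => h U) E; rewrite !ffunE.
by apply: mulfI; exact: d_neq0.
Qed.

Lemma Tspec (f : R) : Rscale d (Tdem i j f) = f - sR i j f.
Proof. rewrite -Rmul_d /Tdem; exact: (epsilon_spec (inhabits (0 : R)) (fun g : R => Rmul (xR i - xR j) g = f - sR i j f) (existsT f)). Qed.

Lemma Tdem_comm (w : R) : Mult w -> sR i j w = w ->
  forall f, Tdem i j (Rmul w f) = Rmul w (Tdem i j f).
Proof.
move=> Mw Iw f; apply: cancelT.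
by rewrite Tspec -RmulZr Tspec RmulBr Mw Iw.
Qed.

End Trans.
End Basic.

Theorem proposition2p11 (n : nat) (i j : 'I_n) (hij : val j = (val i).+1)
  (a : nat) :
  (forall k : 'I_n, k != i -> forall f : R n,
     Tdem i j (Rmul (omL a k) f) = Rmul (omL a k) (Tdem i j f)) /\
  (forall f : R n,
     Tdem i j (Rmul (omL a i - Rmul (xR j) (omL a j)) f)
     = Rmul (omL a i - Rmul (xR j) (omL a j)) (Tdem i j f)).
Proof.
have key k : k != i -> forall f : R n,
     Tdem i j (Rmul (omL a.+1 k) f) = Rmul (omL a.+1 k) (Tdem i j f).
  move=> ki; apply: (Tdem_comm hij); first exact: Mult_omL.
  exact: (inv_omL hij a.+1).1.
split.
  move=> k ki; apply: (Tdem_comm hij); first exact: Mult_omL.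
  exact: (inv_omL hij a).1.
have -> : omL a i - Rmul (xR j) (omL a j) = omL a.+1 j.
  by rewrite /= -(predL_j hij).
by apply: key; rewrite (ij_neq hij).
Qed.
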